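(* Let $A$ be a finite set, $n\ge3$, let $\rho\subseteq A^n$ be a strongly rich relation preserved by a WNU vector-function $(f_1,\dots,f_n)$, and let $\sigma\subseteq A^m$, $m\ge3$, be a totally reflexive relation preserved by $f_1$. Then $\sigma=A^m$.
   Context: $\rho\subseteq A^n$ is strongly rich if for every $(a_1,\dots,a_n)\in A^n$ and every $j$ there is a unique $b\in A$ with $(a_1,\dots,a_{j-1},b,a_{j+1},\dots,a_n)\in\rho$. $\sigma\subseteq A^m$ is totally reflexive if it contains every $(a_1,\dots,a_m)$ with $|\{a_1,\dots,a_m\}|<m$. A WNU is a $k$-ary ($k\ge2$) operation $f$ with $f(x,\dots,x)=x$ and $f(y,x,\dots,x)=f(x,y,x,\dots,x)=\dots=f(x,\dots,x,y)$; a WNU vector-function is a tuple $(f_1,\dots,f_n)$ of $k$-ary WNUs, preserving $\rho$ if applying $f_i$ to the $i$-th coordinates of any $k$ tuples of $\rho$ yields a tuple in $\rho$; a single operation preserves $\sigma$ if applying it coordinatewise to tuples of $\sigma$ yields a tuple of $\sigma$. *)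

(* Defs.v *)
From mathcomp Require Import all_boot.
Set Implicit Arguments. Unset Strict Implicit. Unset Printing Implicit Defensive.

Definition strongly_rich (A : finType) (n : nat) (rho : ('I_n -> A) -> Prop) : Prop :=
  forall (a : 'I_n -> A) (j : 'I_n),
    exists! b : A, rho (fun i => if i == j then b else a i).

Definition totally_reflexive (A : finType) (m : nat) (sigma : ('I_m -> A) -> Prop) : Prop :=
  forall a : 'I_m -> A, #|[set a i | i : 'I_m]| < m -> sigma a.

(* f is a k-ary weak near-unanimity operation (k >= 2 is required separately). *)
Definition is_WNU (A : finType) (k : nat) (f : ('I_k -> A) -> A) : Prop :=
  (forall x : A, f (fun _ => x) = x) /\
  (forall (x y : A) (i j : 'I_k),
      f (fun l => if l == i then y else x) = f (fun l => if l == j then y else x)).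

Definition vec_preserves (A : finType) (n k : nat) (fs : 'I_n -> ('I_k -> A) -> A)
    (rho : ('I_n -> A) -> Prop) : Prop :=
  forall t : 'I_k -> 'I_n -> A, (forall l, rho (t l)) ->
    rho (fun i => fs i (fun l => t l i)).

Definition op_preserves (A : finType) (m k : nat) (f : ('I_k -> A) -> A)
    (sigma : ('I_m -> A) -> Prop) : Prop :=
  forall t : 'I_k -> 'I_m -> A, (forall l, sigma (t l)) ->
    sigma (fun i => f (fun l => t l i)).

(* Main.v *)
Require Import Defs.
From mathcomp Require Import all_boot.
From Stdlib Require Import FunctionalExtensionality.
Set Implicit Arguments. Unset Strict Implicit. Unset Printing Implicit Defensive.

Lemma noninj_card (A : finType) m (b : 'I_m -> A) i i' :
  i != i' -> b i = b i' -> #|[set b x | x : 'I_m]| < m.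
Proof.
move=> ne E; rewrite ltn_neqAle; apply/andP; split; last first.
  by have := leq_imset_card b 'I_m; rewrite card_ord.
apply/negP => /eqP Ec.
have /imset_injP inj : #|[set b x | x in 'I_m]| == #|'I_m| by rewrite Ec card_ord.
by move: ne; rewrite (inj i i' isT isT E) eqxx.
Qed.

Lemma uniq_coord (A : finType) n (rho : ('I_n -> A) -> Prop)
  (H : strongly_rich rho) (t t' : 'I_n -> A) j :
  rho t -> rho t' -> (forall i, i != j -> t i = t' i) -> t j = t' j.
Proof.
move=> rt rt' E; have [b [_ Hb]] := H t j.
have e1 : (fun i => if i == j then t j else t i) = t.
  by apply: functional_extensionality => i; case: eqP => // ->.
have e2 : (fun i => if i == j then t' j else t i) = t'.
  apply: functional_extensionality => i; case: eqP => [->|/eqP ne] //.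
  exact: E.
transitivity b; [symmetry; apply: Hb; by rewrite e1 | apply: Hb; by rewrite e2].
Qed.

Definition T3 (A : Type) n (i0 i1 i2 : 'I_n) (tau : 'I_n -> A) (z a b : A) : 'I_n -> A :=
  fun i => if i == i0 then z else if i == i1 then a else if i == i2 then b else tau i.

Lemma h_inj (A : finType) n (rho : ('I_n -> A) -> Prop) k
  (fs : 'I_n -> ('I_k -> A) -> A) (i0 i1 i2 : 'I_n)
  (d01 : i0 != i1) (d02 : i0 != i2) (d12 : i1 != i2)
  (H : strongly_rich rho) (Hw : forall i, is_WNU (fs i))
  (Hp : vec_preserves fs rho) (l0 : 'I_k) (x0 : A) :
  injective (fun y => fs i0 (fun l => if l == l0 then y else x0)).
Proof.
have d10 : i1 != i0 by rewrite eq_sym.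
have d20 : i2 != i0 by rewrite eq_sym.
have d21 : i2 != i1 by rewrite eq_sym.
pose T := T3 i0 i1 i2 (fun _ => x0).
pose P z a b := rho (T z a b).
have idem : forall i x, fs i (fun _ => x) = x by move=> i x; exact: (proj1 (Hw i)).
have Fhom : forall Z Aa Bb : 'I_k -> A, (forall l, P (Z l) (Aa l) (Bb l)) ->
    P (fs i0 Z) (fs i1 Aa) (fs i2 Bb).
  move=> Z Aa Bb HZ; have := Hp (fun l => T (Z l) (Aa l) (Bb l)) HZ.
  suff -> : (fun i => fs i (fun l => T (Z l) (Aa l) (Bb l) i)) = T (fs i0 Z) (fs i1 Aa) (fs i2 Bb) by [].
  apply: functional_extensionality => i; rewrite /T /T3.
  have [->|ne0] := eqVneq i i0; first by rewrite ?eqxx.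
  rewrite ?(negbTE ne0).
  have [->|ne1] := eqVneq i i1; first by rewrite ?eqxx.
  rewrite ?(negbTE ne1).
  have [->|ne2] := eqVneq i i2; first by rewrite ?eqxx.
  by rewrite ?(negbTE ne2) idem.
have exA : forall z b, exists a, P z a b.
  move=> z b; have [a [Ha _]] := H (T z z b) i1; exists a.
  suff E : (fun i => if i == i1 then a else T z z b i) = T z a b by rewrite /P -E.
  apply: functional_extensionality => i; rewrite /T /T3.
  have [->|ne1] := eqVneq i i1; first by rewrite ?(negbTE d10) ?eqxx.
  by [].
have exB : forall z a, exists b, P z a b.
  move=> z a; have [b [Hb _]] := H (T z a z) i2; exists b.
  suff E : (fun i => if i == i2 then b else T z a z i) = T z a b by rewrite /P -E.
  apply: functional_extensionality => i; rewrite /T /T3.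
  have [->|ne2] := eqVneq i i2; first by rewrite ?(negbTE d20) ?(negbTE d21) ?eqxx.
  by [].
have u0 : forall z z' a b, P z a b -> P z' a b -> z = z'.
  move=> z z' a b h h'; have := uniq_coord (j:=i0) H h h'.
  rewrite /T /T3 eqxx; apply=> i ne; by rewrite (negbTE ne).
have u1 : forall z a a' b, P z a b -> P z a' b -> a = a'.
  move=> z a a' b h h'; have := uniq_coord (j:=i1) H h h'.
  rewrite /T /T3 eqxx (negbTE d10); apply=> i ne; by rewrite (negbTE ne).
have u2 : forall z a b b', P z a b -> P z a b' -> b = b'.
  move=> z a b b' h h'; have := uniq_coord (j:=i2) H h h'.
  rewrite /T /T3 eqxx (negbTE d20) (negbTE d21); apply=> i ne; by rewrite (negbTE ne).
have [a0 Pa0] := exA x0 x0.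
pose G j y := fs i0 (fun l : 'I_k => if l < j then x0 else y).
pose h y := fs i0 (fun l => if l == l0 then y else x0).
have step : forall j (hj : j < k) y, exists p q,
    [/\ P (h y) p x0, P (G j.+1 y) a0 q & P (G j y) p q].
  move=> j hj y; pose lj := Ordinal hj.
  have [ay Pay] := exA y x0; have [By PBy] := exB y a0.
  exists (fs i1 (fun l => if l == lj then ay else a0)).
  exists (fs i2 (fun l => if l < j.+1 then x0 else By)).
  split.
  - rewrite /h -(proj2 (Hw i0) x0 y lj l0).
    suff : P (fs i0 (fun l => if l == lj then y else x0)) (fs i1 (fun l => if l == lj then ay else a0)) (fs i2 (fun _ => x0)) by rewrite idem.
    apply: Fhom => l.
    by case: (l == lj).
  - suff : P (G j.+1 y) (fs i1 (fun _ => a0)) (fs i2 (fun l => if l < j.+1 then x0 else By)) by rewrite idem.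
    apply: Fhom => l; by case: (l < j.+1).
  - apply: Fhom => l.
    have -> : (l == lj) = (nat_of_ord l == j) by [].
    case: (ltngtP l j) => [lt|gt|->].
    + by rewrite ltnS ltnW.
    + by rewrite ltnS leqNgt gt.
    + by rewrite ltnSn.
move=> y y' Ehy.
have down : forall d, d <= k -> G (k - d) y = G (k - d) y'.
  elim=> [_|d IH hd].
    rewrite subn0 /G.
    have E : forall z, (fun l : 'I_k => if l < k then x0 else z) = fun _ => x0.
      by move=> z; apply: functional_extensionality => l; rewrite ltn_ord.
    by rewrite !E.
  have hj : k - d.+1 < k by rewrite -subSn // subSS leq_subr.
  have e : (k - d.+1).+1 = k - d by rewrite -subSn.
  have [p [q [h1 h2 h3]]] := step _ hj y.
  have [p' [q' [h1' h2' h3']]] := step _ hj y'.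
  rewrite e in h2 h2'.
  rewrite /h Ehy in h1.
  have ep := u1 _ _ _ _ h1 h1'.
  rewrite (IH (ltnW hd)) in h2.
  have eq := u2 _ _ _ _ h2 h2'.
  rewrite ep eq in h3; exact: u0 _ _ _ _ h3 h3'.
have := down k (leqnn k); rewrite subnn /G.
have E : forall z, (fun l : 'I_k => if l < 0 then x0 else z) = fun _ => z.
  by move=> z; apply: functional_extensionality => l.
by rewrite !E !idem.
Qed.

Theorem mainTheorem18 (A : finType) (n : nat) (hn : 3 <= n)
    (rho : ('I_n -> A) -> Prop) (k : nat) (hk : 2 <= k)
    (fs : 'I_n -> ('I_k -> A) -> A)
    (m : nat) (hm : 3 <= m) (sigma : ('I_m -> A) -> Prop) :
  strongly_rich rho ->
  (forall i, is_WNU (fs i)) ->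
  vec_preserves fs rho ->
  totally_reflexive sigma ->
  op_preserves (fs (Ordinal (leq_trans (isT : 0 < 3) hn))) sigma ->
  forall a : 'I_m -> A, sigma a.
Proof.
move=> Hr Hw Hp Hs Hf a.
set i0 := Ordinal (leq_trans (isT : 0 < 3) hn) in Hf.
pose i1 : 'I_n := Ordinal (leq_trans (isT : 1 < 3) hn).
pose i2 : 'I_n := Ordinal (leq_trans (isT : 2 < 3) hn).
pose j0 : 'I_m := Ordinal (leq_trans (isT : 0 < 3) hm).
pose j1 : 'I_m := Ordinal (leq_trans (isT : 1 < 3) hm).
pose j2 : 'I_m := Ordinal (leq_trans (isT : 2 < 3) hm).
pose l0 : 'I_k := Ordinal (ltnW hk).
pose l1 : 'I_k := Ordinal hk.
pose f := fs i0.
pose w u v := f (fun l => if l == l0 then v else u).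
have inj : forall u, injective (w u).
  move=> u; apply: (@h_inj _ _ rho _ fs i0 i1 i2) => //.
have [gc _ Kc] := injF_bij (inj (a j0)).
pose c := a j0.
pose v1 := gc (a j1).
have [gv _ Kv] := injF_bij (inj v1).
pose t : 'I_k -> 'I_m -> A := fun l i =>
  if i == j0 then (if l == l0 then gv (a j0) else v1)
  else (if l == l1 then gc (a i) else c).
have := Hf t.
have -> : (fun i => fs i0 (fun l => t l i)) = a.
  apply: functional_extensionality => i; rewrite /t.
  have [->|ne] := eqVneq i j0; first exact: Kv.
  rewrite (proj2 (Hw i0) c (gc (a i)) l1 l0); exact: Kc.
apply=> l; apply: Hs; rewrite /t.
have [El0|ne0] := eqVneq l l0.
  apply: (@noninj_card _ _ _ j1 j2) => //.
  by rewrite El0.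
have [El1|ne1] := eqVneq l l1.
  apply: (@noninj_card _ _ _ j0 j1) => //.
by apply: (@noninj_card _ _ _ j1 j2).
Qed.
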